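(* Let $N=2m+1$ be an odd integer with $N\ge3$. There exist $\varphi,\psi\in\mathbb{C}^N$ such that there is no $c\in\mathbb{C}$ with $|c|=1$ and $\psi=c\varphi$, while for all $k=0,\ldots,2N-3$, $$\Big|P_\varphi\Big(\tfrac{k}{2N-2}\Big)\Big|=\Big|P_\psi\Big(\tfrac{k}{2N-2}\Big)\Big|$$ and $$\Big|P_\varphi\Big(\tfrac{k}{2N-2}\Big)-P_\varphi\Big(\tfrac{k-1}{2N-2}\Big)\Big|=\Big|P_\psi\Big(\tfrac{k}{2N-2}\Big)-P_\psi\Big(\tfrac{k-1}{2N-2}\Big)\Big|.$$
   Context: For $\psi=(\psi_0,\ldots,\psi_{N-1})\in\mathbb{C}^N$, $P_\psi(x)=\sum_{j=0}^{N-1}\psi_je^{2i\pi jx}$ for $x\in\mathbb{R}$ (a $1$-periodic function). *)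

(* Defs.v *)
From Stdlib Require Import Reals.
From Coquelicot Require Import Coquelicot.
Open Scope R_scope.

Definition e2ipi (x : R) : C := (cos (2 * PI * x), sin (2 * PI * x)).

Fixpoint csum (n : nat) (f : nat -> C) : C :=
  match n with
  | O => 0%C
  | S n' => Cplus (csum n' f) (f n')
  end.

(* A vector psi in C^N is represented by psi : nat -> C, only the entries
   psi 0, ..., psi (N-1) being relevant.
   P_psi(x) = sum_{j=0}^{N-1} psi_j e^{2 i pi j x}. *)
Definition P (N : nat) (psi : nat -> C) (x : R) : C :=
  csum N (fun j => Cmult (psi j) (e2ipi (INR j * x))).

(* Main.v *)
Require Import Defs.
From Stdlib Require Import Reals Lra Lia.
From Coquelicot Require Import Coquelicot.
Open Scope R_scope.

Lemma sin_kPI (k : nat) : sin (INR k * PI) = 0.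
Proof.
  induction k as [|k IH].
  - simpl. rewrite Rmult_0_l. apply sin_0.
  - rewrite S_INR. replace ((INR k + 1) * PI) with (INR k * PI + PI) by ring.
    rewrite neg_sin, IH. ring.
Qed.

Lemma csum_sparse (K : nat) (f : nat -> C) :
  (forall j, (0 < j < K)%nat -> f j = 0%C) ->
  forall n, (1 <= n <= K)%nat -> csum n f = f 0%nat.
Proof.
  intros Hf n. induction n as [|n IH]; intros Hn.
  - lia.
  - destruct n as [|n].
    + simpl. apply injective_projections; simpl; ring.
    + change (csum (S (S n)) f) with (Cplus (csum (S n) f) (f (S n))).
      rewrite IH by lia. rewrite (Hf (S n)) by lia.
      apply injective_projections; simpl; ring.
Qed.

Definition ph (m : nat) (b : C) (j : nat) : C :=
  if Nat.eqb j 0 then 1%C else if Nat.eqb j (2*m) then b else 0%C.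

Lemma P_ph (m : nat) (hm : (1 <= m)%nat) b x :
  P (2*m+1) (ph m b) x = Cplus 1%C (Cmult b (e2ipi (INR (2*m) * x))).
Proof.
  unfold P. replace (2*m+1)%nat with (S (2*m)) by lia.
  change (csum (S (2*m)) ?f) with (Cplus (csum (2*m) f) (f (2*m)%nat)).
  rewrite (csum_sparse (2*m)).
  - unfold ph. change (Nat.eqb 0 0) with true. rewrite Nat.eqb_refl.
    replace (Nat.eqb (2*m) 0) with false by (symmetry; apply Nat.eqb_neq; lia).
    unfold e2ipi. simpl INR. rewrite !Rmult_0_l, Rmult_0_r, cos_0, sin_0.
    apply injective_projections; simpl; ring.
  - intros j Hj. unfold ph.
    destruct (Nat.eqb j 0) eqn:E1. { apply Nat.eqb_eq in E1; lia. }
    destruct (Nat.eqb j (2*m)) eqn:E2. { apply Nat.eqb_eq in E2; lia. }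
    apply injective_projections; simpl; ring.
  - lia.
Qed.

Lemma e2_eq (m : nat) (hm : (1 <= m)%nat) r :
  e2ipi (INR (2*m) * (r / INR (2 * (2*m+1) - 2))) = (cos (r * PI), sin (r * PI)).
Proof.
  unfold e2ipi.
  replace (2 * (2*m+1) - 2)%nat with (2 * (2*m))%nat by lia.
  assert (INR (2*m) <> 0) by (apply not_0_INR; lia).
  rewrite (mult_INR 2 (2*m)). replace (INR 2) with 2 by (simpl; ring).
  replace (2 * PI * (INR (2 * m) * (r / (2 * INR (2 * m))))) with (r * PI)
    by (field; auto).
  reflexivity.
Qed.

Theorem mainTheorem15 (m : nat) (hm : (1 <= m)%nat) :
  let N := (2 * m + 1)%nat in
  exists phi psi : nat -> C,
    (~ exists c : C, Cmod c = 1 /\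
         forall j : nat, (j < N)%nat -> psi j = Cmult c (phi j)) /\
    (forall k : nat, (k <= 2 * N - 3)%nat ->
       Cmod (P N phi (INR k / INR (2 * N - 2)))
         = Cmod (P N psi (INR k / INR (2 * N - 2))) /\
       Cmod (Cminus (P N phi (INR k / INR (2 * N - 2)))
                    (P N phi ((INR k - 1) / INR (2 * N - 2))))
         = Cmod (Cminus (P N psi (INR k / INR (2 * N - 2)))
                        (P N psi ((INR k - 1) / INR (2 * N - 2))))).
Proof.
  intros N. exists (ph m Ci), (ph m (Copp Ci)). split.
  - intros [c [_ Hc]].
    assert (H0 := Hc 0%nat ltac:(unfold N; lia)).
    assert (H1 := Hc (2*m)%nat ltac:(unfold N; lia)).
    unfold ph in H0, H1. change (Nat.eqb 0 0) with true in H0. rewrite Nat.eqb_refl in H1.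
    replace (Nat.eqb (2*m) 0) with false in H1 by (symmetry; apply Nat.eqb_neq; lia).
    destruct c as [a b].
    apply (f_equal fst) in H0 as H0a. apply (f_equal snd) in H0 as H0b.
    apply (f_equal fst) in H1 as H1a. apply (f_equal snd) in H1 as H1b.
    simpl in *. lra.
  - intros k Hk. unfold N. rewrite !P_ph by auto. rewrite !e2_eq by auto.
    rewrite sin_kPI. split.
    + unfold Cmod. f_equal. simpl. ring.
    + unfold Cmod. f_equal. simpl. ring.
Qed.
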